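(* Let $X$ be a Banach space such that every bounded linear operator $A:X\to X$ is of the form $A=\lambda I+S$ with $\lambda\in\mathbb{R}$ and $S$ strictly singular. Then $X$ is UALS-saturated.
   Context: $\mathcal{L}(X)$ is the space of bounded linear operators on $X$ with the operator norm. An operator is strictly singular if its restriction to no infinite-dimensional closed subspace is an isomorphism onto its image. Here ''subspace'' means closed infinite-dimensional subspace. $X$ is UALS-saturated if there exists $C>0$ such that for every convex (norm-)compact $W\subset\mathcal{L}(X)$, every $A\in\mathcal{L}(X)$ and $\varepsilon>0$ with the property that for every $x$ in the unit ball of $X$ there is $B\in W$ with $\|(A-B)x\|\le\varepsilon$, it holds that for every subspace $Y$ of $X$ there exist a further subspace $Z\subset Y$ and $B\in W$ with $\|(A-B)|_Z\|_{\mathcal{L}(Z,X)}\le C\varepsilon$. *)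

(* Defs.v *)
From HB Require Import structures.
From mathcomp Require Import all_boot all_order all_algebra.
From mathcomp Require Import all_classical all_reals all_analysis.
Set Implicit Arguments. Unset Strict Implicit. Unset Printing Implicit Defensive.
Import Order.TTheory GRing.Theory Num.Theory.
Import numFieldNormedType.Exports.
Local Open Scope classical_set_scope.
Local Open Scope ring_scope.

Section Defs.
Variables (R : realType) (X : normedModType R).

Definition linear_op (A : X -> X) : Prop :=
  forall (a : R) (x y : X), A (a *: x + y) = a *: A x + A y.

Definition bounded_op (A : X -> X) : Prop :=
  linear_op A /\ exists M : R, forall x : X, `|A x| <= M * `|x|.

Definition lin_indep (n : nat) (v : 'I_n -> X) : Prop :=
  forall c : 'I_n -> R, \sum_(i < n) c i *: v i = 0 -> forall i, c i = 0.

(** A "subspace": a closed, infinite-dimensional linear subspace of X. *)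
Definition subspace (Y : set X) : Prop :=
  [/\ Y 0,
      (forall (a : R) (x y : X), Y x -> Y y -> Y (a *: x + y)),
      closed Y &
      (forall n : nat, exists v : 'I_n -> X, (forall i, Y (v i)) /\ lin_indep v)].

(** The restriction of T to Y is an isomorphism onto its image
    (T bounded linear): T is bounded below on Y. *)
Definition iso_on (T : X -> X) (Y : set X) : Prop :=
  exists c : R, 0 < c /\ forall y : X, Y y -> c * `|y| <= `|T y|.

Definition strictly_singular (S : X -> X) : Prop :=
  bounded_op S /\ forall Y : set X, subspace Y -> ~ iso_on S Y.

Definition opnorm_cvg (B : nat -> X -> X) (L : X -> X) : Prop :=
  forall e : R, 0 < e -> exists N : nat, forall n : nat, (N <= n)%N ->
    forall x : X, `|B n x - L x| <= e * `|x|.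

(** Norm-compactness of a set of operators in the (metric) operator-norm
    topology, expressed as sequential compactness. *)
Definition opnorm_compact (W : set (X -> X)) : Prop :=
  forall B : nat -> X -> X, (forall n, W (B n)) ->
    exists (phi : nat -> nat) (L : X -> X),
      (forall m n : nat, (m < n)%N -> (phi m < phi n)%N) /\ W L /\
      opnorm_cvg (fun n => B (phi n)) L.

Definition convex_ops (W : set (X -> X)) : Prop :=
  forall A B : X -> X, W A -> W B -> forall t : R, 0 <= t -> t <= 1 ->
    W (fun x => t *: A x + (1 - t) *: B x).

Definition UALS_saturated : Prop :=
  exists C : R, 0 < C /\
  forall W : set (X -> X), (forall B, W B -> bounded_op B) ->
    convex_ops W -> opnorm_compact W ->
  forall A : X -> X, bounded_op A -> forall eps : R, 0 < eps ->
    (forall x : X, `|x| <= 1 -> exists B, W B /\ `|A x - B x| <= eps) ->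
  forall Y : set X, subspace Y ->
    exists Z : set X, [/\ subspace Z, Z `<=` Y &
      exists B, W B /\ forall z : X, Z z -> `|A z - B z| <= C * eps * `|z|].

End Defs.

(* Main.v *)
Require Import Defs.
From mathcomp Require Import all_boot all_order all_algebra.
From mathcomp Require Import all_classical all_reals all_analysis.
From mathcomp Require Import ring lra.
Import Order.TTheory GRing.Theory Num.Theory.
Import numFieldNormedType.Exports.
Local Open Scope ring_scope.
Local Open Scope classical_set_scope.

Local Notation dsub := Defs.subspace.

Section Basics.
Context {R : realType} {X : normedModType R}.

Lemma closureP (A : set X) z :
  closure A z <-> (forall e : R, 0 < e -> exists w, A w /\ `|z - w| < e).
Proof.
split.
- move=> cl e e0; have [w [Aw bw]] := cl _ (nbhsx_ballx z e e0).
  by exists w; split => //; move: bw; rewrite -ball_normE.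
- move=> H B /nbhs_ballP [e e0 sB]; have [w [Aw zw]] := H e e0.
  exists w; split => //; apply: sB; rewrite -ball_normE; exact: zw.
Qed.

Lemma closedP (A : set X) :
  closed A <-> (forall z, (forall e : R, 0 < e -> exists w, A w /\ `|z - w| < e) -> A z).
Proof.
split.
- by move=> cA z H; apply: cA; apply/closureP.
- by move=> H z /closureP; apply: H.
Qed.

End Basics.

Section Lin.
Context {R : realType} {X : normedModType R}.

Lemma lin0 (T : X -> X) : linear_op T -> T 0 = 0.
Proof.
move=> lT; have := lT 1 0 0; rewrite !scale1r addr0.
by move=> /(congr1 (fun z => z - T 0)) /=; rewrite subrr addrK => H; rewrite -H.
Qed.

Lemma linZ (T : X -> X) a x : linear_op T -> T (a *: x) = a *: T x.
Proof. by move=> lT; have := lT a x 0; rewrite addr0 (lin0 _ lT) addr0. Qed.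

Lemma linD (T : X -> X) x y : linear_op T -> T (x + y) = T x + T y.
Proof. by move=> lT; have := lT 1 x y; rewrite !scale1r. Qed.

Lemma linN (T : X -> X) x : linear_op T -> T (- x) = - T x.
Proof. by move=> lT; rewrite -scaleN1r linZ // scaleN1r. Qed.

Lemma linB (T : X -> X) x y : linear_op T -> T (x - y) = T x - T y.
Proof. by move=> lT; rewrite linD // linN. Qed.

Lemma lin_sum (T : X -> X) n (c : 'I_n -> R) (v : 'I_n -> X) : linear_op T ->
  T (\sum_(i < n) c i *: v i) = \sum_(i < n) c i *: T (v i).
Proof.
move=> lT; elim/big_rec2: _ => [|i y1 y2 _ <-]; first exact: lin0.
by rewrite linD // linZ.
Qed.

Definition lset (V : set X) := V 0 /\ forall (a : R) x y, V x -> V y -> V (a *: x + y).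

Lemma lsetD V x y : lset V -> V x -> V y -> V (x + y).
Proof. by move=> [_ H] Vx Vy; have := H 1 x y Vx Vy; rewrite scale1r. Qed.

Lemma lsetZ V a x : lset V -> V x -> V (a *: x).
Proof. by move=> [V0 H] Vx; have := H a x 0 Vx V0; rewrite addr0. Qed.

Lemma lsetN V x : lset V -> V x -> V (- x).
Proof. by move=> lV Vx; rewrite -scaleN1r; apply: lsetZ. Qed.

Lemma lsetB V x y : lset V -> V x -> V y -> V (x - y).
Proof. by move=> lV Vx Vy; apply: lsetD => //; apply: lsetN. Qed.

Lemma lset_sum V n (c : 'I_n -> R) (v : 'I_n -> X) : lset V ->
  (forall i, V (v i)) -> V (\sum_(i < n) c i *: v i).
Proof.
move=> lV Vv; elim/big_rec: _ => [|i y _ Vy]; first by case: lV.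

by case: lV => _ H; apply: H.
Qed.

Lemma subspace_lset {V} : Defs.subspace V -> lset V.
Proof. by rewrite /subspace => -[? ? _ _]; split. Qed.

End Lin.

Section HB.
Context {R : realType} {X : normedModType R}.
Variables (V : set X) (lV : lset V) (y0 : X) (Vy0 : V y0) (ny0 : `|y0| = 1).

Definition Qg (G : set (X * R)) :=
  [/\ (forall x r s, G (x, r) -> G (x, s) -> r = s),
      (forall a x r x' r', G (x, r) -> G (x', r') -> G (a *: x + x', a * r + r')),
      (forall x r, G (x, r) -> V x) &
      (forall x r, G (x, r) -> r <= `|x|)].

Definition G0 : set (X * R) := [set p | exists t : R, p = (t *: y0, t)].

Lemma y0_neq0 : y0 != 0.
Proof. by apply/eqP => y00; move: ny0; rewrite y00 normr0 => /eqP; rewrite eq_sym oner_eq0. Qed.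

Lemma QG0 : Qg G0.
Proof.
split.
- move=> x r s [t [-> ->]] [u [ts ->]]; move/eqP: ts; rewrite -subr_eq0 -scalerBl.
  by rewrite scaler_eq0 (negbTE y0_neq0) orbF subr_eq0 => /eqP.
- move=> a x r x' r' [t [-> ->]] [u [-> ->]]; exists (a * t + u).
  by rewrite scalerDl scalerA.
- by move=> x r [t [-> _]]; apply: lsetZ.
- by move=> x r [t [-> ->]]; rewrite normrZ ny0 mulr1 ler_norm.
Qed.

Lemma Qg0 {G} : G0 `<=` G -> G (0, 0).
Proof. by move=> sG; apply: sG; exists 0; rewrite scale0r. Qed.

Lemma QgZ {G} a {x r} : Qg G -> G0 `<=` G -> G (x, r) -> G (a *: x, a * r).
Proof.
move=> [_ Gl _ _] sG Gxr; have := Gl a x r 0 0 Gxr (Qg0 sG).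
by rewrite addr0 addr0.
Qed.

Lemma QgB {G x r x' r'} : Qg G -> G (x, r) -> G (x', r') -> G (x - x', r - r').
Proof.
move=> [_ Gl _ _] Gxr Gxr'; have := Gl (-1) x' r' x r Gxr' Gxr.
by rewrite scaleN1r mulN1r addrC [- r' + _]addrC.
Qed.

Lemma hb_ext G x0 : Qg G -> G0 `<=` G -> V x0 -> ~ (exists r, G (x0, r)) ->
  exists G' c, [/\ Qg G', G `<=` G' & G' (x0, c)].
Proof.
move=> QG sG Vx0 nx0; have [Gf Gl GV Gd] := QG.
pose L := [set u | exists x r, G (x, r) /\ u = r - `|x - x0|].
have L0 : L (0 - `|0 - x0|) by exists 0, 0; split => //; exact: Qg0.
have ubL x' r' : G (x', r') -> ubound L (`|x' + x0| - r').
  move=> Gx' _ [x [r [Gxr ->]]].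
  have := Gd _ _ (Gl 1 x r x' r' Gxr Gx'); rewrite scale1r mul1r => h1.
  have : `|x + x'| <= `|x - x0| + `|x' + x0|.
    rewrite (_ : x + x' = (x - x0) + (x' + x0)); first exact: ler_normD.
    by rewrite addrACA addNr addr0.
  move=> h2; lra.
pose c := sup L.
have Lc u : L u -> u <= c.
  move=> Lu; apply: ub_le_sup => //; exists (`|0 + x0| - 0); apply: ubL; exact: Qg0.
have cU x' r' : G (x', r') -> c <= `|x' + x0| - r'.
  by move=> Gx'; apply: ge_sup; [exists (0 - `|0 - x0|)|apply: ubL].
pose G' := [set p | exists x r t, G (x, r) /\ p = (x + t *: x0, r + t * c)].
exists G', c; split; [|by move=> [x r] Gxr; exists x, r, 0; rewrite scale0r mul0r !addr0
  |by exists 0, 0, 1; split; [exact: Qg0|rewrite !add0r scale1r mul1r]].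
split.
- move=> x r s [x1 [r1 [t1 [G1 [-> ->]]]]] [x2 [r2 [t2 [G2 [e12 ->]]]]].
  have [t12|t12] := eqVneq t1 t2.
    subst t2; have e := addIr _ e12; subst x2; by rewrite (Gf _ _ _ G1 G2).
  exfalso; apply: nx0; exists ((t1 - t2)^-1 * (r2 - r1)).
  have e : x0 = (t1 - t2)^-1 *: (x2 - x1).
    have : (t1 - t2) *: x0 = x2 - x1.
      rewrite scalerBl; apply/eqP; rewrite subr_eq addrAC -e12 addrAC subrr add0r.
      by [].
    move=> <-; rewrite scalerA mulVf ?scale1r //; by rewrite subr_eq0.
  rewrite e; have := QgZ ((t1 - t2)^-1) QG sG (QgB QG G2 G1); by [].
- move=> a x r x' r' [x1 [r1 [t1 [G1 [-> ->]]]]] [x2 [r2 [t2 [G2 [-> ->]]]]].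
  exists (a *: x1 + x2), (a * r1 + r2), (a * t1 + t2); split; first exact: Gl.
  congr pair; last by ring.
  by rewrite scalerDr scalerA addrACA -scalerDl.
- move=> x r [x1 [r1 [t1 [G1 [-> _]]]]]; apply: lsetD => //; first exact: GV G1.
  exact: lsetZ.
- move=> x r [x1 [r1 [t1 [G1 [-> ->]]]]].
  have [t0|t0|->] := ltgtP t1 0; last by rewrite scale0r mul0r !addr0; exact: Gd G1.
  + set u := - t1; have u0 : 0 < u by rewrite oppr_gt0.
    have Gu := QgZ (u^-1) QG sG G1.
    have := Lc _ (ex_intro _ _ (ex_intro _ _ (conj Gu erefl))).
    have e : `|x1 + t1 *: x0| = u * `|u^-1 *: x1 - x0|.
      have -> : u * `|u^-1 *: x1 - x0| = `|u *: (u^-1 *: x1 - x0)|.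
        by rewrite normrZ gtr0_norm.
      rewrite scalerBr scalerA mulfV ?gt_eqF //.
      by rewrite scale1r /u scaleNr opprK.
    rewrite e => h; have := ler_wpM2l (ltW u0) h.
    rewrite mulrBr mulrA mulfV ?gt_eqF // mul1r /u mulNr => h'; lra.
  + have Gu := QgZ (t1^-1) QG sG G1; have := cU _ _ Gu.
    have e : `|x1 + t1 *: x0| = t1 * `|t1^-1 *: x1 + x0|.
      have -> : t1 * `|t1^-1 *: x1 + x0| = `|t1 *: (t1^-1 *: x1 + x0)|.
        by rewrite normrZ gtr0_norm.
      rewrite scalerDr scalerA mulfV ?gt_eqF //.
      by rewrite scale1r.
    rewrite e => h; have := ler_wpM2l (ltW t0) h.
    rewrite mulrBr mulrA mulfV ?gt_eqF // mul1r => h'; lra.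
Qed.


Lemma hb_zorn : exists G, [/\ Qg G, G0 `<=` G & forall x, V x -> exists r, G (x, r)].
Proof.
pose P (A : set (X * R)) := Qg (A `|` G0).
have [|A [PA Amax]] := @Zorn_bigcup _ P.
  move=> F FP Ftot.
  pose U := (\bigcup_(A in F) A) `|` G0.
  have two p q : U p -> U q -> exists H, [/\ Qg H, H `<=` U, H p & H q].
    have sub A : F A -> A `|` G0 `<=` U.
      by move=> FA z [Az|Gz]; [left; exists A|right].
    case=> [[A1 FA1 A1p]|G0p]; case=> [[A2 FA2 A2q]|G0q].
    - have [s12|s21] := Ftot _ _ FA1 FA2.
      + exists (A2 `|` G0); split; [exact: FP|exact: sub|left; exact: s12|by left].
      + exists (A1 `|` G0); split; [exact: FP|exact: sub|by left|left; exact: s21].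
    - by exists (A1 `|` G0); split; [exact: FP|exact: sub|left|right].
    - by exists (A2 `|` G0); split; [exact: FP|exact: sub|right|left].
    - exists G0; split => //; [exact: QG0|by move=> z Gz; right].
  split.
  - move=> x r s Ur Us; have [H [[Hf _ _ _] _ Hr Hs]] := two _ _ Ur Us; exact: Hf Hr Hs.
  - move=> a x r x' r' Ur Us; have [H [[_ Hl _ _] sH Hr Hs]] := two _ _ Ur Us.
    exact/sH/Hl.
  - move=> x r Ur; have [H [[_ _ HV _] _ Hr _]] := two _ _ Ur Ur; exact: HV Hr.
  - move=> x r Ur; have [H [[_ _ _ Hd] _ Hr _]] := two _ _ Ur Ur; exact: Hd Hr.
exists (A `|` G0); split; [exact: PA|by move=> z Gz; right|].
move=> x Vx; apply: contrapT => nx.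
have [G' [c [QG' sG' G'x]]] := hb_ext _ _ PA (fun z Gz => or_intror Gz) Vx nx.
apply: (Amax G').
  split; first by move=> z Az; apply: sG'; left.
  move=> sGA; apply: nx; exists c; rewrite /setU /=; left; exact: sGA.
rewrite /P.
have -> : G' `|` G0 = G' by apply/seteqP; split => [z [//|Gz]|z Gz]; [apply: sG'; right|left].
exact: QG'.
Qed.

End HB.


Lemma hahn_banach {R : realType} {X : normedModType R} (V : set X) (y0 : X) :
  lset V -> V y0 -> `|y0| = 1 ->
  exists h : X -> R, [/\ (forall a x x', V x -> V x' -> h (a *: x + x') = a * h x + h x'),
    (forall x, V x -> `|h x| <= `|x|) & h y0 = 1].
Proof.
move=> lV Vy0 ny0.
have [G [QG sG full]] := @hb_zorn _ _ V lV y0 Vy0 ny0.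
have [Gf Gl GV Gd] := QG.
pose h x := xget 0 [set r | G (x, r)].
have hG x : V x -> G (x, h x) by move=> Vx; apply: (@xgetPex _ 0 [set r | G (x, r)]); exact: full.
exists h; split.
- move=> a x x' Vx Vx'; apply: (Gf (a *: x + x')); first apply: hG.
    by case: lV => _ H; apply: H.
  exact: Gl (hG _ Vx) (hG _ Vx').
- move=> x Vx; rewrite ler_norml; apply/andP; split; last exact: Gd (hG _ Vx).
  have := Gd _ _ (QgZ V y0 (-1) QG sG (hG _ Vx)).
  by rewrite scaleN1r normrN mulN1r lerNl.
- apply: (Gf y0); first exact: hG.
  by apply: sG; exists 1; rewrite scale1r.
Qed.



Section Ker.
Context {R : realType} {X : normedModType R}.

Lemma normr_small (r : R) : (forall e : R, 0 < e -> `|r| < e) -> r = 0.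
Proof.
move=> H; apply/eqP; rewrite -normr_eq0 eq_le normr_ge0 andbT.
by apply/ler_addgt0Pr => e e0; rewrite add0r; apply: ltW; apply: H.
Qed.

Lemma ker_subspace (V : set X) (h : X -> R) : dsub V ->
  (forall a x x', V x -> V x' -> h (a *: x + x') = a * h x + h x') ->
  (forall x, V x -> `|h x| <= `|x|) -> dsub [set x | V x /\ h x = 0].
Proof.
move=> sV hl hb; have lV := subspace_lset sV; case: sV => V0 Vl cV Vdim.
have h0 : h 0 = 0.
  have := hl 1 0 0 V0 V0; rewrite scale1r addr0 mul1r.
  by move=> /(congr1 (fun z => z - h 0)) /=; rewrite subrr addrK => H; rewrite -H.
split.
- by split.
- move=> a x y [Vx hx] [Vy hy]; split; first exact: Vl.
  by rewrite hl // hx hy mulr0 addr0.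
- apply/closedP => z H.
  have Vz : V z.
    move/closedP: cV; apply => e e0; have [w [[Vw _] zw]] := H e e0.
    by exists w.
  split => //; apply: normr_small => e e0.
  have [w [[Vw hw] zw]] := H e e0.
  have : h z = h (1 *: (z - w) + w) by rewrite scale1r subrK.
  rewrite hl //; last exact: lsetB.
  rewrite hw mul1r addr0 => ->; apply: le_lt_trans zw; apply: hb.
  exact: lsetB.
- move=> m; have [u [Vu iu]] := Vdim m.+1.
  have [k hk] : exists k, h (u k) != 0 \/ forall j, h (u j) = 0.
    case: (pselect (exists k, h (u k) != 0)) => [[k hk]|nk]; first by exists k; left.
    exists ord0; right => j; apply/eqP; apply: contrapT => hj.
    by apply: nk; exists j; apply/negP.
  pose b (i : 'I_m) := h (u (lift k i)) / h (u k).
  exists (fun i => (- b i) *: u k + u (lift k i)); split.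
    move=> i; split; first exact: Vl.
    rewrite hl // mulNr /b; case: hk => [hk|h0'].
      by rewrite mulfVK // addNr.
    by rewrite !h0' mulr0 oppr0 add0r.
  move=> c csum i.
  pose d (j : 'I_m.+1) := if unlift k j is Some i then c i else \sum_(i < m) c i * - b i.
  have := iu d; rewrite (bigD1_ord k) //= /d unlift_none.
  under eq_bigr do rewrite liftK.
  move=> /(_ _ (lift k i)); rewrite liftK; apply.
  apply: etrans csum; rewrite scaler_suml -big_split /=; apply: eq_bigr => j _.
  by rewrite scalerDr scalerA.
Qed.

Lemma ss_vec (T : X -> X) (V : set X) (e : R) : strictly_singular T -> dsub V -> 0 < e ->
  exists y, [/\ V y, `|y| = 1 & `|T y| <= e].
Proof.
move=> [[lT _] nT] sV e0; have lV := subspace_lset sV.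
apply: contrapT => ny; apply: (nT V sV); exists e; split => // y Vy.
have [->|y0] := eqVneq y 0; first by rewrite normr0 mulr0.
have ny0 : 0 < `|y| by rewrite normr_gt0.
have : `|T (`|y|^-1 *: y)| > e.
  rewrite ltNge; apply/negP => le; apply: ny; exists (`|y|^-1 *: y); split => //.
    exact: lsetZ.
  by rewrite normrZ normfV normr_id mulVf // gt_eqF.
rewrite linZ // normrZ normfV normr_id => lt.
have := ltW lt; rewrite -(ler_pM2l ny0) mulrA mulfV ?gt_eqF // mul1r.
by rewrite mulrC.
Qed.

End Ker.


Section Seq.
Context {R : realType} {X : normedModType R}.
Variables (y : nat -> X) (hh : nat -> X -> R) (Vs : nat -> set X).
Hypotheses (Hy : forall n, Vs n (y n)) (Hny : forall n, `|y n| = 1)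
  (Hhl : forall n a x x', Vs n x -> Vs n x' -> hh n (a *: x + x') = a * hh n x + hh n x')
  (Hhb : forall n x, Vs n x -> `|hh n x| <= `|x|)
  (Hhy : forall n, hh n (y n) = 1)
  (HV : forall n x, Vs n.+1 x <-> (Vs n x /\ hh n x = 0))
  (HlV : forall n, lset (Vs n)).

Lemma lset_sumn (V : set X) m n (c : nat -> R) : lset V ->
  (forall i, (m <= i < n)%N -> V (y i)) -> V (\sum_(m <= i < n) c i *: y i).
Proof.
move=> lV Vy; rewrite big_seq_cond; elim/big_rec: _ => [|i x /andP [im _] Vx].
  by case: lV.
by case: lV => _ H; apply: H => //; apply: Vy; rewrite -mem_index_iota.
Qed.

Lemma Vs_dec k n : (k <= n)%N -> Vs n `<=` Vs k.
Proof.
elim: n => [|n IH]; first by rewrite leqn0 => /eqP ->.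
rewrite leq_eqVlt => /orP [/eqP ->//|]; rewrite ltnS => kn x /HV [Vx _].
exact: IH.
Qed.

Lemma tail_in k m N (c : nat -> R) : (k <= m)%N -> Vs k (\sum_(m <= i < N) c i *: y i).
Proof.
move=> km; apply: lset_sumn => // i /andP [mi _].
exact: (Vs_dec k i (leq_trans km mi) _ (Hy i)).
Qed.

Lemma tail_h k N (c : nat -> R) : (k < N)%N ->
  hh k (\sum_(k <= i < N) c i *: y i) = c k.
Proof.
move=> kN; rewrite big_ltn // Hhl //; last exact: tail_in.
rewrite Hhy mulr1; have /HV [_ ->] := tail_in k.+1 k.+1 N c (leqnn _); by rewrite addr0.
Qed.

Lemma coef_step N (c : nat -> R) k : (k < N)%N ->
  `|c k| <= `|\sum_(0 <= i < N) c i *: y i| + \sum_(0 <= i < k) `|c i|.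
Proof.
move=> kN; rewrite -(tail_h k N c kN); apply: le_trans (Hhb _ _ (tail_in k k N c (leqnn _))) _.
rewrite (big_cat_nat (leq0n k) (ltnW kN)) /=.
set A := \sum_(0 <= i < k) c i *: y i; set B := \sum_(k <= i < N) _.
have e : B = (A + B) - A by rewrite addrC addKr.
rewrite {1}e.
apply: le_trans (ler_normB _ _) _; apply: lerD => //.
rewrite /A; apply: le_trans (ler_norm_sum _ _ _) _; apply: ler_sum => i _.
by rewrite normrZ Hny mulr1.
Qed.

Lemma coef_sum N (c : nat -> R) k : (k <= N)%N ->
  \sum_(0 <= i < k) `|c i| <= (2%:R ^+ k - 1) * `|\sum_(0 <= i < N) c i *: y i|.
Proof.
elim: k => [|k IH] kN; first by rewrite big_geq // expr0 subrr mul0r.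
rewrite big_nat_recr //=; have := coef_step N c k kN; have := IH (ltnW kN).
rewrite exprS; set w := `|_|; set s := \sum_(0 <= i < k) _; set P := 2%:R ^+ k.
move=> h1 h2; nra.
Qed.

Lemma coef_bound N (c : nat -> R) k : (k < N)%N ->
  `|c k| <= 2%:R ^+ k * `|\sum_(0 <= i < N) c i *: y i|.
Proof.
move=> kN; have := coef_step N c k kN; have := coef_sum N c k (ltnW kN).
set w := `|_|; set s := \sum_(0 <= i < k) _; set P := 2%:R ^+ k.
move=> h1 h2; nra.
Qed.


Definition Ssp (z : X) := exists N (c : nat -> R), z = \sum_(0 <= i < N) c i *: y i.
Definition Zc (z : X) := forall e : R, 0 < e -> exists s, Ssp s /\ `|z - s| < e.

Lemma pad N M (c : nat -> R) : (N <= M)%N ->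
  \sum_(0 <= i < N) c i *: y i = \sum_(0 <= i < M) (if (i < N)%N then c i else 0) *: y i.
Proof.
move=> NM; rewrite (big_cat_nat (leq0n N) NM) /=.
rewrite [X in _ = _ + X]big_nat_cond [X in _ = _ + X]big1 ?addr0.
  by apply: eq_big_nat => i /andP [_ ->].
by move=> i /andP [/andP [Ni _] _]; rewrite ltnNge Ni scale0r.
Qed.

Lemma Ssp0 : Ssp 0.
Proof. by exists 0%N, (fun _ => 0); rewrite big_geq. Qed.

Lemma Ssp_lin a z1 z2 : Ssp z1 -> Ssp z2 -> Ssp (a *: z1 + z2).
Proof.
move=> [N1 [c1 ->]] [N2 [c2 ->]].
exists (N1 + N2)%N, (fun i => a * (if (i < N1)%N then c1 i else 0) + (if (i < N2)%N then c2 i else 0)).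
rewrite (pad N1 (N1 + N2) c1 (leq_addr N2 N1)) (pad N2 (N1 + N2) c2 (leq_addl N1 N2)).
rewrite scaler_sumr -big_split /=; apply: eq_bigr => i _.
by rewrite scalerDl scalerA.
Qed.

Lemma Zc_lset : lset Zc.
Proof.
split.
  by move=> e e0; exists 0; split; [exact: Ssp0|rewrite subr0 normr0].
move=> a x x' Zx Zx' e e0.
have e2 : 0 < e / 2 by rewrite divr_gt0.
have ea : 0 < e / 2 / (`|a| + 1) by rewrite divr_gt0 // ltr_wpDl.
have [s [Ss xs]] := Zx _ ea; have [s' [Ss' xs']] := Zx' _ e2.
exists (a *: s + s'); split; first exact: Ssp_lin.
have -> : a *: x + x' - (a *: s + s') = a *: (x - s) + (x' - s').
  by rewrite scalerBr opprD addrACA.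
apply: le_lt_trans (ler_normD _ _) _; rewrite normrZ.
have : `|a| * `|x - s| <= e / 2.
  have a1 : 0 < `|a| + 1 by rewrite ltr_wpDl.
  apply: le_trans (ler_wpM2l (normr_ge0 a) (ltW xs)) _.
  rewrite mulrA ler_pdivrMr //.
  by rewrite mulrC ler_pM2l // lerDl ler01.
move=> h; have : e = e / 2 + e / 2 by rewrite -splitr.
move=> ee; rewrite [X in _ < X]ee; apply: ler_ltD => //.
Qed.

Lemma Zc_closed : closed Zc.
Proof.
apply/closedP => z H e e0.
have e2 : 0 < e / 2 by rewrite divr_gt0.
have [w [Zw zw]] := H _ e2; have [s [Ss ws]] := Zw _ e2.
exists s; split => //; rewrite (splitr e).
by apply: le_lt_trans (ler_distD w _ _) _; apply: ltrD.
Qed.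

Lemma Ssp_Zc z : Ssp z -> Zc z.
Proof. by move=> Sz e e0; exists z; rewrite subrr normr0. Qed.

Lemma Zc_sub : closed (Vs 0) -> Zc `<=` Vs 0.
Proof.
move=> cV z Zz; move/closedP: cV; apply => e e0.
have [s [[N [c ->]] zs]] := Zz e e0; exists (\sum_(0 <= i < N) c i *: y i); split => //.
exact: tail_in.
Qed.

Lemma Zc_indep n : lin_indep (fun i : 'I_n => y i).
Proof.
case: n => [|m] c csum i; first by case: i.
pose c' (j : nat) := c (inord j).
have z0 : \sum_(0 <= j < m.+1) c' j *: y j = 0.
  rewrite big_mkord; apply: etrans csum.
  apply: eq_bigr => j _; by rewrite /c' inord_val.
have := coef_bound _ c' _ (ltn_ord i); rewrite z0 normr0 mulr0 normr_le0 => /eqP.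
by rewrite /c' inord_val.
Qed.

Lemma Zc_subspace : closed (Vs 0) -> Defs.subspace Zc.
Proof.
move=> _; have [Z0 Zl] := Zc_lset; split => //; first exact: Zc_closed.
move=> n; exists (fun i : 'I_n => y i); split; last exact: Zc_indep.
by move=> i; apply: Ssp_Zc; exists i.+1, (fun j => if j == nat_of_ord i then 1 else 0);
  rewrite big_nat_recr //= eqxx scale1r big_nat_cond big1 ?add0r //;
  move=> j /andP [/andP [_ ji] _]; rewrite (ltn_eqF ji) scale0r.
Qed.

Lemma geom_sum N : \sum_(0 <= i < N) (2%:R ^+ i.+1 : R)^-1 = 1 - (2%:R ^+ N)^-1.
Proof.
elim: N => [|N IH]; first by rewrite big_geq // expr0 invr1 subrr.
rewrite big_nat_recr //= IH exprS.
have h : (2%:R ^+ N : R) != 0 by rewrite expf_neq0 // pnatr_eq0.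
field.
exact: h.
Qed.

Variables (T : X -> X) (del : R).
Hypotheses (bT : bounded_op T) (del0 : 0 < del)
  (HT : forall n, `|T (y n)| <= del / (2%:R ^+ n * 2%:R ^+ n.+1)).

Lemma T_Ssp z : Ssp z -> `|T z| <= del * `|z|.
Proof.
case: bT => lT _; move=> [N [c ->]]; set w := \sum_(0 <= i < N) _.
have -> : T w = \sum_(0 <= i < N) c i *: T (y i).
  rewrite /w; elim/big_rec2: _ => [|i y1 y2 _ <-]; first exact: lin0.
  by rewrite linD // linZ.
apply: le_trans (ler_norm_sum _ _ _) _.
apply: (@le_trans _ _ (\sum_(0 <= i < N) del * `|w| * (2%:R ^+ i.+1)^-1)).
  rewrite big_nat_cond [X in _ <= X]big_nat_cond; apply: ler_sum => i /andP [/andP [_ iN] _].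
  rewrite normrZ; apply: le_trans (ler_wpM2l (normr_ge0 _) (HT i)) _.
  apply: le_trans (ler_wpM2r _ (coef_bound _ c _ iN)) _.
    by rewrite divr_ge0 // ?ltW // mulr_ge0 // exprn_ge0.
  rewrite -/w; have h : (2%:R ^+ i : R) != 0 by rewrite expf_neq0 // pnatr_eq0.
  rewrite exprS le_eqVlt; apply/orP; left; apply/eqP; field.
  exact: h.
rewrite -mulr_sumr geom_sum; apply: ler_piMr.
  by rewrite mulr_ge0 // ltW.
by rewrite lerBlDr lerDl invr_ge0 exprn_ge0.
Qed.

Lemma T_Zc z : Zc z -> `|T z| <= del * `|z|.
Proof.
case: bT => lT [M HM] Zz; apply/ler_addgt0Pr => e e0.
set K := `|M| + del + 1; have K0 : 0 < K by rewrite /K ltr_wpDl // addr_ge0 // ltW.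
have [s [Ss zs]] := Zz _ (divr_gt0 e0 K0).
have h1 := T_Ssp _ Ss.
have h2 : `|T (z - s)| <= `|M| * `|z - s|.
  by apply: le_trans (HM _) _; apply: ler_wpM2r => //; exact: ler_norm.
have h3 : `|s| <= `|z| + `|z - s|.
  by rewrite -[s in `|s|](subrK z) -opprB addrC; apply: le_trans (ler_normB _ _) _; rewrite addrC.
have h4 : K * `|z - s| <= e.
  by rewrite mulrC -ler_pdivlMr // ltW.
have h5 : `|T z| <= `|T s| + `|T (z - s)|.
  by rewrite linB //; have := ler_normD (T s) (T z - T s); rewrite [T s + _]addrC subrK.
have h6 : del * `|s| <= del * `|z| + del * `|z - s|.
  by rewrite -mulrDr; apply: ler_wpM2l => //; exact: ltW.
move: h4; rewrite /K => h4.
set a := `|z - s| in h2 h4 h6; set b := `|T (z - s)| in h2 h5.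
have a0 : 0 <= a by apply: normr_ge0.
nra.
Qed.

End Seq.


Section Small.
Context {R : realType} {X : normedModType R}.

Lemma small_norm (T : X -> X) (Y : set X) (del : R) :
  strictly_singular T -> dsub Y -> 0 < del ->
  exists Z, [/\ dsub Z, Z `<=` Y & forall z, Z z -> `|T z| <= del * `|z|].
Proof.
move=> sT sY del0.
pose eps (n : nat) : R := del / (2%:R ^+ n * 2%:R ^+ n.+1).
pose good (n : nat) (V : set X) (q : X * (X -> R)) :=
  [/\ V q.1, `|q.1| = 1, `|T q.1| <= eps n &
      [/\ (forall a x x', V x -> V x' -> q.2 (a *: x + x') = a * q.2 x + q.2 x'),
      (forall x, V x -> `|q.2 x| <= `|x|) & q.2 q.1 = 1]].
have step (p : nat * set X) : exists q, dsub p.2 -> good p.1 p.2 q.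
  case: (pselect (dsub p.2)) => [sV|nV]; last by exists (0, fun _ => 0).
  have e0 : 0 < eps p.1.
    by rewrite /eps divr_gt0 // mulr_gt0 // exprn_gt0 // ltr0n.
  have [v [Vv nv Tv]] := ss_vec _ _ _ sT sV e0.
  have [h [hl hb hv]] := hahn_banach _ _ (subspace_lset sV) Vv nv.
  by exists (v, h) => _; split.
have [f Hf] := choice step.
pose Vs := fix Vs (n : nat) : set X :=
  match n with 0%N => Y | n'.+1 => [set x | Vs n' x /\ (f (n', Vs n')).2 x = 0] end.
pose y n := (f (n, Vs n)).1; pose hh n := (f (n, Vs n)).2.
have sVs n : dsub (Vs n).
  elim: n => [//|n IH]; have [_ _ _ [hl hb _]] := Hf (n, Vs n) IH.
  exact: ker_subspace.
have G n : good n (Vs n) (y n, hh n) by exact: (Hf (n, Vs n) (sVs n)).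
have Hy n : Vs n (y n) by case: (G n).
have Hny n : `|y n| = 1 by case: (G n).
have HT n : `|T (y n)| <= eps n by case: (G n).
have Hhl n : forall a x x', Vs n x -> Vs n x' -> hh n (a *: x + x') = a * hh n x + hh n x'.
  by case: (G n) => _ _ _ [].
have Hhb n : forall x, Vs n x -> `|hh n x| <= `|x| by case: (G n) => _ _ _ [].
have Hhy n : hh n (y n) = 1 by case: (G n) => _ _ _ [].
have HV n x : Vs n.+1 x <-> (Vs n x /\ hh n x = 0) by [].
have HlV n : lset (Vs n) by apply: subspace_lset.
have cY : closed (Vs 0) by case: sY.
exists (Zc y); split.
- exact: (Zc_subspace _ _ _ Hy Hny Hhl Hhb Hhy HV HlV cY).
- exact: (Zc_sub _ _ _ Hy HV HlV cY).
- case: sT => bT _; exact: (T_Zc _ _ _ Hy Hny Hhl Hhb Hhy HV HlV _ _ bT del0 HT).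
Qed.

End Small.


Section Fin.
Context {R : realType} {X : normedModType R}.

Lemma small_norm_fin (k : nat) (Ts : nat -> X -> X) (Y : set X) (del : R) :
  (forall i, (i < k)%N -> strictly_singular (Ts i)) -> dsub Y -> 0 < del ->
  exists Z, [/\ dsub Z, Z `<=` Y &
    forall i z, (i < k)%N -> Z z -> `|Ts i z| <= del * `|z|].
Proof.
move=> sTs sY del0; elim: k sTs => [|k IH] sTs.
  by exists Y; split => // i z.
have [Z1 [sZ1 Z1Y HZ1]] := IH (fun i ik => sTs i (ltnW ik)).
have [Z2 [sZ2 Z21 HZ2]] := small_norm _ _ _ (sTs k (ltnSn k)) sZ1 del0.
exists Z2; split => //; first by move=> z /Z21 /Z1Y.
move=> i z; rewrite ltnS leq_eqVlt => /orP [/eqP ->|ik] Zz; first exact: HZ2.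
by apply: HZ1 => //; apply: Z21.
Qed.

Lemma unit_vec (Z : set X) : dsub Z -> exists x, Z x /\ `|x| = 1.
Proof.
move=> sZ; have lZ := subspace_lset sZ; case: sZ => _ _ _ dZ.
have [v [Zv iv]] := dZ 1%N.
have v0 : v ord0 != 0.
  apply/eqP => v0; have := iv (fun _ => 1); rewrite big_ord1 v0 scaler0.
  by move=> /(_ erefl ord0) /eqP; rewrite oner_eq0.
exists (`|v ord0|^-1 *: v ord0); split; first exact: lsetZ.
by rewrite normrZ normfV normr_id mulVf // normr_eq0.
Qed.

Lemma net (W : set (X -> X)) (del : R) : opnorm_compact W -> 0 < del ->
  exists k (B : nat -> X -> X), (forall i, (i < k)%N -> W (B i)) /\
    forall B', W B' -> exists i, (i < k)%N /\ forall x, `|B' x - B i x| <= del * `|x|.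
Proof.
move=> cW del0; apply: contrapT => nn.
pose close (B1 B2 : X -> X) := forall x, `|B1 x - B2 x| <= del * `|x|.
have step (p : nat * (nat -> X -> X)) : exists B',
    (forall i, (i < p.1)%N -> W (p.2 i)) -> W B' /\ forall i, (i < p.1)%N -> ~ close B' (p.2 i).
  case: (pselect (forall i, (i < p.1)%N -> W (p.2 i))) => [Wp|nW]; last first.
    by exists (fun _ => 0) => /nW.
  apply: contrapT => nB; apply: nn; exists p.1, p.2; split => // B' WB'.
  apply: contrapT => nc; apply: nB; exists B' => _; split => // i ip ci.
  by apply: nc; exists i.
have [g Hg] := choice step.
pose d : X -> X := fun _ => 0.
pose l := fix l (n : nat) : seq (X -> X) :=
  match n with 0%N => [::] | n'.+1 => rcons (l n') (g (n', fun i => nth d (l n') i)) end.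
have sl n : size (l n) = n by elim: n => //= n IH; rewrite size_rcons IH.
have lS n i : (i < n)%N -> nth d (l n.+1) i = nth d (l n) i.
  by move=> ilt /=; rewrite nth_rcons sl ilt.
have lmon n m i : (i < n)%N -> (n <= m)%N -> nth d (l m) i = nth d (l n) i.
  move=> ilt; elim: m => [|m IH]; first by rewrite leqn0 => /eqP ->.
  rewrite leq_eqVlt => /orP [/eqP ->//|]; rewrite ltnS => nm.
  by rewrite lS ?IH // (leq_trans ilt nm).
pose b n := nth d (l n.+1) n.
have lb n i : (i < n)%N -> nth d (l n) i = b i.
  by move=> ilt; rewrite (lmon i.+1 n i) // ltnSn.
have bE n : b n = g (n, fun i => nth d (l n) i).
  by rewrite /b /= nth_rcons sl ltnn eqxx.
have Wb n : forall i, (i < n)%N -> W (b i).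
  elim: n => [//|n IH] i; rewrite ltnS leq_eqVlt => /orP [/eqP ->|ilt]; last exact: IH.
  rewrite bE; case: (Hg (n, fun i => nth d (l n) i)) => //= j jn.
  by rewrite lb //; apply: IH.
have nb n i : (i < n)%N -> ~ close (b n) (b i).
  move=> ilt; have := Hg (n, fun i => nth d (l n) i).
  case=> /= [j jn|_ H]; first by rewrite lb //; apply: Wb jn.
  by rewrite bE -(lb n i ilt); apply: H.
have [phi [L [phiM [WL cv]]]] := cW b (fun n => Wb n.+1 n (ltnSn n)).
have [N HN] := cv (del / 2) (divr_gt0 del0 (ltr0n _ 2)).
apply: (nb (phi N.+1) (phi N) (phiM _ _ (ltnSn N))) => x.
have h1 := HN N.+1 (leqnSn N) x; have h2 := HN N (leqnn N) x.
have -> : b (phi N.+1) x - b (phi N) x = (b (phi N.+1) x - L x) - (b (phi N) x - L x).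
  by rewrite opprB addrA subrK.
apply: le_trans (ler_normB _ _) _.
apply: le_trans (lerD h1 h2) _.
by rewrite -mulrDl -splitr.
Qed.

End Fin.


Lemma bounded_sub {R : realType} {X : normedModType R} (A B : X -> X) :
  bounded_op A -> bounded_op B -> bounded_op (fun x => A x - B x).
Proof.
move=> [lA [MA HA]] [lB [MB HB]]; split.
  move=> a x y; rewrite lA lB scalerBr.
  by rewrite opprD addrACA.
exists (MA + MB) => x; apply: le_trans (ler_normB _ _) _.
by rewrite mulrDl; apply: lerD.
Qed.

Theorem theorem5p8 (R : realType) (X : completeNormedModType R) :
  (forall A : X -> X, bounded_op A ->
     exists lambda : R, strictly_singular (fun x => A x - lambda *: x)) ->
  UALS_saturated X.
Proof.
move=> Hss; exists 2; split => // W Wb Wc Wk A bA eps eps0 Hx Y sY.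
pose del := eps / 3.
have del0 : 0 < del by rewrite divr_gt0.
have [k [B [WB Bnet]]] := net _ _ Wk del0.
have hnu (i : nat) : exists nu : R, (i < k)%N ->
    strictly_singular (fun x => (A x - B i x) - nu *: x).
  case: (pselect (i < k)%N) => [ik|nik]; last by exists 0.
  have [nu Hnu] := Hss _ (bounded_sub _ _ bA (Wb _ (WB i ik))).
  by exists nu.
have [nu Hnu] := choice hnu.
have [Z [sZ ZY HZ]] := small_norm_fin _ _ _ _ (fun i => Hnu i) sY del0.
exists Z; split => //.
have [x [Zx nx]] := unit_vec _ sZ.
have x1 : `|x| <= 1 by rewrite nx.
have [B' [WB' B'x]] := Hx x x1.
have [i [ik Bi]] := Bnet B' WB'.
set T := fun x => A x - B i x - nu i *: x.
have HT z : Z z -> `|T z| <= del * `|z| by exact: HZ.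
have nub : `|nu i| <= eps + del + del.
  have e1 : nu i *: x = (A x - B i x) - T x by rewrite /T opprB addrCA subrr addr0.
  have : `|nu i *: x| <= `|A x - B i x| + `|T x|.
    by rewrite e1; apply: ler_normB.
  rewrite normrZ nx mulr1 => h1.
  have h2 : `|A x - B i x| <= `|A x - B' x| + `|B' x - B i x|.
    exact: ler_distD.
  have := HT x Zx; have := Bi x; rewrite nx mulr1 => h3 h4.
  lra.
exists (B i); split; first exact: WB.
move=> z Zz; have e2 : A z - B i z = T z + nu i *: z by rewrite /T subrK.
rewrite e2; apply: le_trans (ler_normD _ _) _; rewrite normrZ.
have := HT z Zz; have w0 : 0 <= `|z| by [].
have : del * 3 = eps by rewrite /del divfK // pnatr_eq0.
move: nub; set w := `|z|; set a := `|nu i|; set t := `|T z| => h1 h2 h3.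
have h4 := ler_wpM2r w0 h1; rewrite -h2 in h4 *; clearbody del.
rewrite -/w in h4; lra.
Qed.
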